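(* Let $P$ be an $n\times n$ sign pattern and $A\in\mathcal{Q}(P)$. If $A$ has the nSSP, then there is $\epsilon>0$ such that for every $M\in M_n(\mathbb{R})$ with $\|M-A\|<\epsilon$ there exists $A'\in\mathcal{Q}(P)$ such that $A'$ is similar to $M$ and $A'$ has the nSSP.
   Context: $M_n(\mathbb{R})$ is the set of real $n\times n$ matrices and $\|\cdot\|$ the Frobenius norm. A sign pattern is an array with entries in $\{+,-,0\}$; its qualitative class $\mathcal{Q}(P)$ is the set of real matrices of the same size whose entries have the signs prescribed by $P$. $\circ$ is the entrywise product. A matrix $A\in M_n(\mathbb{R})$ has the non-symmetric strong spectral property (nSSP) if $X=O$ is the only matrix $X\in M_n(\mathbb{R})$ with $A\circ X=O$ and $AX^\top-X^\top A=O$. *)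

(* Defs.v *)
From mathcomp Require Import all_boot all_order all_algebra.
From mathcomp Require Import reals.
Set Implicit Arguments. Unset Strict Implicit. Unset Printing Implicit Defensive.
Import Order.TTheory GRing.Theory Num.Theory.
Local Open Scope ring_scope.

Inductive sgn := SPos | SNeg | SZero.

Definition sgn_holds {R : realType} (s : sgn) (x : R) : bool :=
  match s with
  | SPos => 0 < x
  | SNeg => x < 0
  | SZero => x == 0
  end.

Definition inQ {R : realType} (n : nat) (P : 'I_n -> 'I_n -> sgn) (A : 'M[R]_n) : Prop :=
  forall i j, sgn_holds (P i j) (A i j).

Definition hadamard {R : realType} (n : nat) (A B : 'M[R]_n) : 'M[R]_n :=
  \matrix_(i, j) (A i j * B i j).

Definition frob {R : realType} (n : nat) (A : 'M[R]_n) : R :=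
  Num.sqrt (\sum_(i < n) \sum_(j < n) A i j ^+ 2).

Definition nSSP {R : realType} (n : nat) (A : 'M[R]_n) : Prop :=
  forall X : 'M[R]_n,
    hadamard A X = 0 -> A *m X^T - X^T *m A = 0 -> X = 0.

Definition mx_similar {R : realType} (n : nat) (A B : 'M[R]_n) : Prop :=
  exists S : 'M[R]_n, S \in unitmx /\ B = invmx S *m A *m S.

(* Main.v *)
Require Import Defs.
From mathcomp Require Import all_boot all_order all_algebra.
From mathcomp Require Import reals.
From mathcomp Require Import all_classical all_analysis.
From HB Require Import structures.
From mathcomp Require Import ring lra.
Import Order.TTheory GRing.Theory Num.Theory.
Import numFieldNormedType.Exports.
Local Open Scope ring_scope.
Local Open Scope classical_set_scope.
Set Implicit Arguments. Unset Strict Implicit. Unset Printing Implicit Defensive.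
HB.instance Definition _ (R : realType) (m k : nat) :=
  Uniform_isComplete.Build 'M[R]_(m, k) (@cauchy_cvg 'M[R]_(m, k)).

Section Norms.
Variable R : realType.

Lemma mxn_entry p q (M : 'M[R]_(p, q)) i j : `|M i j| <= `|M|.
Proof.
rewrite [leRHS]/Num.norm /= mx_normrE; apply/bigmax_geP; right => /=; by exists (i, j).
Qed.

Lemma mxn_le p q (M : 'M[R]_(p, q)) c : 0 <= c -> (forall i j, `|M i j| <= c) -> `|M| <= c.
Proof.
move=> c0 H; rewrite [leLHS]/Num.norm /= mx_normrE; apply: bigmax_le => // ij _; exact: H.
Qed.

Lemma mxn_mul p k q (A : 'M[R]_(p, k)) (B : 'M[R]_(k, q)) :
  `|A *m B| <= k%:R * `|A| * `|B|.
Proof.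
apply: mxn_le; first by rewrite !mulr_ge0.
move=> i j; rewrite mxE (le_trans (ler_norm_sum _ _ _)) //.
apply: (@le_trans _ _ (\sum_(l < k) `|A| * `|B|)).
  by apply: ler_sum => l _; rewrite normrM ler_pM // mxn_entry.
by rewrite sumr_const card_ord -mulrA mulr_natl.
Qed.


Lemma mxn_vec p q (u : 'rV[R]_(p * q)) : `|vec_mx u| <= `|u|.
Proof. by apply: mxn_le => // i j; rewrite mxE mxn_entry. Qed.

Lemma mxn_mxvec p q (W : 'M[R]_(p, q)) : `|mxvec W| <= `|W|.
Proof.
apply: mxn_le => // i k; rewrite (ord1 i).
by case/mxvec_indexP: k => a b; rewrite mxvecE mxn_entry.
Qed.

Lemma mxn_lsub p q k (Z : 'M[R]_(p, q + k)) : `|lsubmx Z| <= `|Z|.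
Proof. by apply: mxn_le => // i j; rewrite mxE mxn_entry. Qed.

Lemma mxn_rsub p q k (Z : 'M[R]_(p, q + k)) : `|rsubmx Z| <= `|Z|.
Proof. by apply: mxn_le => // i j; rewrite mxE mxn_entry. Qed.

Lemma entry_sq_le p q (X : 'M[R]_(p, q)) i j :
  X i j ^+ 2 <= \sum_i \sum_j X i j ^+ 2.
Proof.
apply: (@le_trans _ _ (\sum_j X i j ^+ 2)).
  rewrite (bigD1 j) //= lerDl; apply: sumr_ge0 => *; exact: sqr_ge0.
rewrite (bigD1 i) //= lerDl; apply: sumr_ge0 => *; apply: sumr_ge0 => *.
exact: sqr_ge0.
Qed.

Lemma sumsq_ge0 p q (X : 'M[R]_(p, q)) : 0 <= \sum_i \sum_j X i j ^+ 2.
Proof. by apply: sumr_ge0 => *; apply: sumr_ge0 => *; exact: sqr_ge0. Qed.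

Lemma mxn_frob k (X : 'M[R]_k) : `|X| <= frob X.
Proof.
apply: mxn_le; first exact: sqrtr_ge0.
move=> i j; rewrite /frob -sqrtr_sqr ler_sqrt ?sumsq_ge0 //; exact: entry_sq_le.
Qed.

Lemma mxn_sq_le k (X : 'M[R]_k) : `|X| ^+ 2 <= \sum_i \sum_j X i j ^+ 2.
Proof.
rewrite -(sqr_sqrtr (sumsq_ge0 X)) lerXn2r ?nnegrE ?sqrtr_ge0 //.
exact: mxn_frob.
Qed.

Lemma fixed_ball (X : completeNormedModType R) (F : X -> X) (r : R) : 0 < r ->
  (forall x, `|x| <= r -> `|F x| <= r) ->
  (forall x y, `|x| <= r -> `|y| <= r -> `|F x - F y| <= 2^-1 * `|x - y|) ->
  exists x, `|x| <= r /\ x = F x.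
Proof.
move=> r0 Fr Fl.
pose U := closed_ball (0 : X) r.
have UE x : U x <-> `|x| <= r.
  by rewrite /U closed_ballE //= /closed_ball_ /= sub0r normrN.
have FU : {homo F : x / U x >-> U x} by move=> x /UE /Fr /UE.
pose G := mkfun FU.
have : exists2 p, U p & p = G p.
  apply: banach_fixed_point.
  - exists (2^-1)%:nng; split; first by rewrite /= invf_lt1 // ltr1n.
    move=> [x y] /= [/UE xr /UE yr]; exact: Fl.
  - exact: closed_ball_closed.
  - by exists 0; apply/UE; rewrite normr0 ltW.
move=> [x /UE xr xE]; exists x; split => //.
Qed.
End Norms.

Section Lin.
Variables (R : realType) (n : nat) (A : 'M[R]_n).

Lemma mulss_ge0 (x : R) : 0 <= x * x.
Proof. by rewrite -expr2 sqr_ge0. Qed.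

Definition mask (Y : 'M[R]_n) : 'M[R]_n :=
  \matrix_(i, j) (if A i j == 0 then 0 else Y i j).

Lemma maskP a Y Y' : mask (a *: Y + Y') = a *: mask Y + mask Y'.
Proof.
apply/matrixP => i j; rewrite !mxE; case: ifP => _ //.
by rewrite mulr0 addr0.
Qed.

Lemma mask0 : mask 0 = 0.
Proof. by apply/matrixP => i j; rewrite !mxE; case: ifP. Qed.

Lemma zmod_id (V : zmodType) (p q r s t u : V) :
  p + q + (r + s) + (- t - u) = p + r - t + (q + s - u).
Proof. by rewrite [p + q + (r + s)]addrACA [RHS]addrACA. Qed.

Definition Lf (Z : 'M[R]_(n, n + n)) : 'M[R]_n :=
  mask (lsubmx Z) + rsubmx Z *m A - A *m rsubmx Z.

Fact Lf_linear : linear Lf.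
Proof.
move=> a u v; rewrite /Lf.
have -> : lsubmx (a *: u + v) = a *: lsubmx u + lsubmx v by rewrite linearP.
have -> : rsubmx (a *: u + v) = a *: rsubmx u + rsubmx v by rewrite linearP.
rewrite maskP mulmxDl mulmxDr -scalemxAl -scalemxAr.
rewrite scalerBr scalerDr.
set p := a *: mask _. set q := mask _. set r := a *: (_ *m A). set s := _ *m A. set t := a *: (A *m _). set w := A *m _. by rewrite opprD zmod_id.
Qed.

HB.instance Definition _ := GRing.isLinear.Build R _ _ _ Lf Lf_linear.

Definition Lm := lin_mx Lf.

Lemma LmE Z : mxvec Z *m Lm = mxvec (Lf Z).
Proof. exact: mul_vec_lin. Qed.

Definition ip (U X : 'M[R]_n) := \sum_i \sum_j U i j * X i j.

Lemma ip_mxvec U X : (mxvec U *m (mxvec X)^T) 0 0 = ip U X.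
Proof.
rewrite mxE (reindex _ (curry_mxvec_bij _ _)) /= /ip pair_bigA.
by apply: eq_bigr => [[i j]] _ /=; rewrite !mxE !mxvecE.
Qed.

Lemma ip_tr U X : ip U X = \tr (U *m X^T).
Proof.
by apply: eq_bigr => i _; rewrite mxE; apply: eq_bigr => j _; rewrite !mxE.
Qed.

Lemma ip_comm K B X :
  ip (K *m B - B *m K) X = \tr (K *m (B *m X^T - X^T *m B)).
Proof.
rewrite ip_tr mulmxBl mulmxBr !raddfB /=.
by rewrite -!mulmxA [\tr (B *m _)]mxtrace_mulC -mulmxA.
Qed.

Lemma ip_self_eq0 X : ip X X = 0 -> X = 0.
Proof.
move=> H; apply/matrixP => i j; rewrite mxE.
have /psumr_eq0P H1 : \sum_i \sum_j X i j * X i j = 0 by [].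
have := H1 (fun i _ => sumr_ge0 _ (fun j _ => mulss_ge0 _)) i isT.
move/psumr_eq0P => /(_ (fun j _ => mulss_ge0 _)) /(_ j isT) /eqP.
by rewrite mulf_eq0 orbb => /eqP.
Qed.


Lemma ip_bound (U X : 'M[R]_n) : `|ip U X| <= n%:R * (n%:R * (`|U| * `|X|)).
Proof.
rewrite /ip (le_trans (ler_norm_sum _ _ _)) //.
apply: (@le_trans _ _ (\sum_(i < n) (n%:R * (`|U| * `|X|)))); last first.
  by rewrite sumr_const card_ord (mulr_natl (n%:R * (`|U| * `|X|)) n).
apply: ler_sum => i _; rewrite (le_trans (ler_norm_sum _ _ _)) //.
apply: (@le_trans _ _ (\sum_(j < n) (`|U| * `|X|))); last first.
  by rewrite sumr_const card_ord (mulr_natl (`|U| * `|X|) n).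
by apply: ler_sum => j _; rewrite normrM ler_pM // mxn_entry.
Qed.

Lemma ipXX_ge (X : 'M[R]_n) : `|X| ^+ 2 <= ip X X.
Proof.
by rewrite (le_trans (mxn_sq_le X)).
Qed.

Definition Gm (W : 'M[R]_n) : 'M[R]_(n, n + n) := vec_mx (mxvec W *m pinvmx Lm).

Lemma LfG W : row_full Lm -> Lf (Gm W) = W.
Proof.
move=> f; apply: (can_inj (@mxvecK _ n n)).
by rewrite -LmE vec_mxK mulmxKpV //; exact: submx_full.
Qed.

Lemma GmB W1 W2 : Gm (W1 - W2) = Gm W1 - Gm W2.
Proof. by rewrite /Gm !linearB /= mulmxBl linearB. Qed.

Lemma Gm_bound W : `|Gm W| <= ((n * n)%:R * `|pinvmx Lm|) * `|W|.
Proof.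
rewrite (le_trans (mxn_vec _)) // (le_trans (mxn_mul _ _)) //.
by rewrite mulrAC ler_wpM2l ?mulr_ge0 // mxn_mxvec.
Qed.

Lemma maskB Y1 Y2 : mask Y1 - mask Y2 = mask (Y1 - Y2).
Proof. by apply/matrixP => i j; rewrite !mxE; case: ifP; rewrite ?subr0. Qed.

Lemma mxn_mask Y : `|mask Y| <= `|Y|.
Proof.
apply: mxn_le => // i j; rewrite mxE; case: ifP => _; last exact: mxn_entry.
by rewrite normr0.
Qed.

Lemma Lm_full : nSSP A -> row_full Lm.
Proof.
move=> hS; apply: contraT => nf.
have : ~~ row_free Lm^T by rewrite /row_free /row_full mxrank_tr in nf *.
rewrite -kermx_eq0 => /rowV0Pn [u /sub_kermxP uL unz].
have LuT : Lm *m u^T = 0 by rewrite -(trmxK Lm) -trmx_mul uL trmx0.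
pose X := vec_mx u.
have uE : u = mxvec X by rewrite vec_mxK.
have ipz Z : ip (Lf Z) X = 0.
  by rewrite -ip_mxvec -LmE -uE -mulmxA LuT mulmx0 mxE.
have hX : hadamard A X = 0.
  have := ipz (row_mx X 0); rewrite /Lf row_mxKl row_mxKr mul0mx mulmx0 subr0 addr0.
  move=> H.
  have /psumr_eq0P H1 := H.
  have ge0 : forall i j, 0 <= mask X i j * X i j.
    by move=> i' j'; rewrite mxE; case: ifP => _; rewrite ?mul0r // mulss_ge0.
  apply/matrixP => i j; rewrite [LHS]mxE [RHS]mxE.
  have := H1 (fun i _ => sumr_ge0 _ (fun j _ => ge0 i j)) i isT.
  move/psumr_eq0P => /(_ (fun j _ => ge0 i j)) /(_ j isT).
  rewrite [mask X i j]mxE; case: eqP => [-> _ | _ /eqP]; first by rewrite mul0r.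
  by rewrite mulf_eq0 orbb => /eqP ->; rewrite mulr0.
pose C := A *m X^T - X^T *m A.
have hC : C = 0.
  apply: ip_self_eq0.
  have := ipz (row_mx 0 C^T); rewrite /Lf row_mxKl row_mxKr mask0 add0r ip_comm.
  by rewrite -/C ip_tr mxtrace_mulC.
have X0 : X = 0 by apply: hS.
by move: unz; rewrite uE X0 linear0 eqxx.
Qed.


Lemma ipB U V X : ip (U - V) X = ip U X - ip V X.
Proof.
rewrite /ip -sumrB; apply: eq_bigr => i _; rewrite -sumrB.
by apply: eq_bigr => j _; rewrite !mxE mulrBl.
Qed.

Lemma ipD U V X : ip (U + V) X = ip U X + ip V X.
Proof.
rewrite /ip -big_split; apply: eq_bigr => i _; rewrite -big_split.
by apply: eq_bigr => j _; rewrite !mxE mulrDl.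
Qed.

Lemma unit_small (K : 'M[R]_n) : n%:R * `|K| < 1 -> (1%:M + K) \in unitmx.
Proof.
move=> h; rewrite -row_free_unit -kermx_eq0; apply: contraT.
move=> /rowV0Pn [v /sub_kermxP vT vnz].
have ev : v = - (v *m K).
  by apply/eqP; rewrite -addr_eq0 -[v in v + _]mulmx1 -mulmxDr vT.
have hv : `|v| <= n%:R * `|v| * `|K|.
  by rewrite {1}ev normrN mxn_mul.
have v0 : `|v| <= 0.
  have := normr_ge0 v; have := normr_ge0 K; nra.
by move: vnz; rewrite -normr_le0 v0.
Qed.

Lemma nSSP_pert (P : 'I_n -> 'I_n -> sgn) (A' : 'M[R]_n) (c r : R) :
  row_full Lm -> inQ P A -> inQ P A' ->
  (forall W, `|Gm W| <= c * `|W|) -> 0 <= c -> `|A' - A| <= r -> 0 <= r ->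
  2 * (n%:R ^+ 3) * c * r < 1 -> nSSP A'.
Proof.
move=> full hQ hQ' hG c0 hD r0 hsmall X hX hC.
set D := A' - A.
set Z0 := Gm X. set Y0 := lsubmx Z0. set K0 := rsubmx Z0.
have hL : mask Y0 + K0 *m A - A *m K0 = X := LfG X full.
have m0 : ip (mask Y0) X = 0.
  apply: big1 => i _; apply: big1 => j _; rewrite mxE.
  case: ifP => [_|/negbT Anz]; first by rewrite mul0r.
  have A'nz : A' i j != 0.
    have := hQ i j; have := hQ' i j; case: (P i j) => /= h' h.
    - by rewrite (gt_eqF h').
    - by rewrite (lt_eqF h').
    - by rewrite h in Anz.
  move/matrixP: hX => /(_ i j); rewrite !mxE => /eqP.
  by rewrite mulf_eq0 (negbTE A'nz) /= => /eqP ->; rewrite mulr0.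
have comm0 : ip (K0 *m A' - A' *m K0) X = 0.
  by rewrite ip_comm hC mulmx0 linear0.
have eX : X = mask Y0 + (K0 *m A' - A' *m K0) - (K0 *m D - D *m K0).
  rewrite -{1}hL /D mulmxBr mulmxBl.
  by apply/matrixP => i j; rewrite !mxE; ring.
have ipXX : ip X X = - ip (K0 *m D - D *m K0) X.
  by rewrite {1}eX ipB ipD m0 comm0 add0r sub0r.
have hK : `|K0| <= c * `|X| by rewrite (le_trans (mxn_rsub _)) ?hG.
have ht : `|K0 *m D - D *m K0| <= 2 * n%:R * (c * `|X|) * r.
  rewrite (le_trans (ler_normB _ _)) // (le_trans (lerD (mxn_mul _ _) (mxn_mul _ _))) //.
  have k0 := normr_ge0 K0; have d0 := normr_ge0 D.
  have kd : `|K0| * `|D| <= (c * `|X|) * r := ler_pM k0 d0 hK hD.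
  have -> : n%:R * `|K0| * `|D| + n%:R * `|D| * `|K0| = (2 * n%:R) * (`|K0| * `|D|) by ring.
  by rewrite -[2 * n%:R * _ * r]mulrA; apply: ler_wpM2l.
have hx : `|X| ^+ 2 <= n%:R * (n%:R * (`|K0 *m D - D *m K0| * `|X|)).
  rewrite (le_trans (ipXX_ge X)) // ipXX (le_trans (ler_norm _)) // normrN.
  exact: ip_bound.
have x0 := normr_ge0 X; have t0 := normr_ge0 (K0 *m D - D *m K0).
have n0 : 0 <= n%:R :> R by [].
have hx2 : `|X| ^+ 2 <= (2 * (n%:R ^+ 3) * c * r) * `|X| ^+ 2.
  apply: (le_trans hx).
  have -> : 2 * (n%:R ^+ 3) * c * r * `|X| ^+ 2 =
     n%:R * (n%:R * ((2 * n%:R * (c * `|X|) * r) * `|X|)) by ring.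
  apply: ler_wpM2l => //; apply: ler_wpM2l => //; exact: ler_wpM2r.
have : `|X| ^+ 2 <= 0 by nra.
rewrite expr2 => hxx.
have : `|X| <= 0 by nra.
by rewrite normr_le0 => /eqP.
Qed.

End Lin.

Lemma num1 (R : realFieldType) (c m e r : R) : 1 <= c -> 1 <= m -> 0 <= e -> 0 < r ->
  c * m * e <= r/4 -> c * m * r <= 1/8 -> c * (e + m * e * r + m * r * r) <= r.
Proof. move=> c1 m1 e0 r0 h1 h2.
have cm1 : 1 <= c * m by nra.
have r1 : r <= 1 by nra.
have ce0 : 0 <= c * e by nra.
have h3 : c * e <= c * m * e by nra.
have h4 : c * m * e * r <= r / 4 by nra.
have h5 : c * m * r * r <= r / 8 by nra.
have -> : c * (e + m * e * r + m * r * r) = c * e + c * m * e * r + c * m * r * r by ring.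
lra.
Qed.

Lemma num2 (R : realFieldType) (c m e r : R) : 1 <= c -> 1 <= m -> 0 <= e -> 0 < r ->
  c * m * e <= r/4 -> c * m * r <= 1/8 -> c * (m * e + m * r + m * r) <= 2^-1.
Proof. move=> c1 m1 e0 r0 h1 h2.
have cm1 : 1 <= c * m by nra.
have r1 : r <= 1 by nra.
have -> : c * (m * e + m * r + m * r) = c * m * e + 2 * (c * m * r) by ring.
lra.
Qed.

Lemma eW_id (R : comRingType) n (E K1 K2 Y1 Y2 : 'M[R]_n) :
  E + E *m K1 - K1 *m Y1 - (E + E *m K2 - K2 *m Y2) =
  E *m (K1 - K2) - ((K1 - K2) *m Y1 + K2 *m (Y1 - Y2)).
Proof.
rewrite !mulmxBr !mulmxBl.
by apply/matrixP => i j; rewrite !mxE; ring.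
Qed.

Lemma hMT_id (R : comRingType) n (A E K D : 'M[R]_n) :
  (A + E) *m (1%:M + K) - (1%:M + K) *m (A + D) =
  (E + E *m K - K *m D) - (D + K *m A - A *m K).
Proof.
rewrite !mulmxDr !mulmxDl !mulmx1 !mul1mx.
by apply/matrixP => i j; rewrite !mxE; ring.
Qed.

Theorem theorem5p2 (R : realType) (n : nat) (P : 'I_n -> 'I_n -> sgn)
    (A : 'M[R]_n) :
  inQ P A -> nSSP A ->
  exists eps : R, 0 < eps /\
    forall M : 'M[R]_n, frob (M - A) < eps ->
      exists A' : 'M[R]_n, inQ P A' /\ mx_similar A' M /\ nSSP A'.
Proof.
move=> hQ hS.
have full := Lm_full hS.
pose c := (n * n)%:R * `|pinvmx (Lm A)| + 1.
have c1 : 1 <= c by rewrite lerDr mulr_ge0.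
have c0 : 0 <= c by apply: le_trans c1.
have hG W : `|Gm A W| <= c * `|W|.
  by apply: (le_trans (Gm_bound A W)); apply: ler_wpM2r => //; rewrite lerDl.
pose m : R := (n%:R + 1) ^+ 3.
have N0 : 0 <= n%:R :> R by [].
have m1 : 1 <= m by rewrite exprn_ege1 // lerDr.
have nm : n%:R <= m.
  apply: (@le_trans _ _ (n%:R + 1)); first by rewrite lerDl.
  by rewrite ler_eXnr // lerDr.
have n3m : n%:R ^+ 3 <= m by rewrite lerXn2r ?nnegrE ?addr_ge0 // lerDl.
pose a := \big[Num.min/1]_(ij : 'I_n * 'I_n)
   (if A ij.1 ij.2 == 0 then 1 else `|A ij.1 ij.2|).
have a0 : 0 < a.
  rewrite /a; elim/big_ind: _ => //; first by move=> x y x0 y0; rewrite lt_min x0 y0.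
  by move=> [i j] _ /=; case: ifP => // /negbT; rewrite normr_gt0.
have aA i j : A i j != 0 -> a <= `|A i j|.
  by move=> Anz; rewrite /a (bigD1 (i, j)) //= (negbTE Anz) ge_min lexx.
pose r := Num.min (8 * c * m)^-1 (a / 2).
have m0 : 0 < m by apply: lt_le_trans m1.
have cpos : 0 < c by apply: lt_le_trans c1.
have r0 : 0 < r by rewrite lt_min invr_gt0 !mulr_gt0 ?divr_gt0.
have ra : r <= a / 2 by rewrite ge_min lexx orbT.
have rcm : c * m * r <= 1 / 8.
  have h : r <= (8 * c * m)^-1 by rewrite ge_min lexx.
  have := ler_wpM2l (ltW (mulr_gt0 cpos m0)) h.
  have -> : c * m * (8 * c * m)^-1 = 1 / 8.
    by field; rewrite ?mulf_neq0 // gt_eqF.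
  by [].
pose eps := r / (4 * c * m).
have eps0 : 0 < eps by rewrite divr_gt0 // !mulr_gt0.
have cme : c * m * eps = r / 4.
  by rewrite /eps; field; rewrite ?mulf_neq0 // gt_eqF.
exists eps; split => // M hM.
pose E := M - A.
have hE : `|E| <= eps := ltW (le_lt_trans (mxn_frob E) hM).
have e0 := normr_ge0 E.
have cmE : c * m * `|E| <= r / 4.
  by rewrite -cme; apply: ler_wpM2l => //; rewrite mulr_ge0 // ltW.
pose F := fun Z : 'M[R]_(n, n + n) =>
  Gm A (E + E *m rsubmx Z - rsubmx Z *m mask A (lsubmx Z)).
have Fball : forall Z, `|Z| <= r -> `|F Z| <= r.
  move=> Z Zr.
  have hk : `|rsubmx Z| <= r := le_trans (mxn_rsub Z) Zr.
  have hy : `|mask A (lsubmx Z)| <= r := le_trans (mxn_mask _ _) (le_trans (mxn_lsub Z) Zr).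
  apply: (le_trans (hG _)).
  have hW : `|E + E *m rsubmx Z - rsubmx Z *m mask A (lsubmx Z)|
      <= `|E| + m * `|E| * r + m * r * r.
    rewrite (le_trans (ler_normB _ _)) // (le_trans (lerD (ler_normD _ _) (lexx _))) //.
    rewrite -!addrA lerD2l; apply: lerD.
    - apply: (le_trans (mxn_mul _ _)).
      exact: ler_pM (mulr_ge0 N0 e0) (normr_ge0 _) (ler_pM N0 e0 nm (lexx _)) hk.
    - apply: (le_trans (mxn_mul _ _)).
      exact: ler_pM (mulr_ge0 N0 (normr_ge0 _)) (normr_ge0 _)
                   (ler_pM N0 (normr_ge0 _) nm hk) hy.
  apply: (le_trans (ler_wpM2l c0 hW)); exact: num1.
have Flip : forall Z1 Z2, `|Z1| <= r -> `|Z2| <= r ->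
    `|F Z1 - F Z2| <= 2^-1 * `|Z1 - Z2|.
  move=> Z1 Z2 h1 h2; rewrite /F -GmB; apply: (le_trans (hG _)).
  set K1 := rsubmx Z1; set K2 := rsubmx Z2.
  set Y1 := mask A (lsubmx Z1); set Y2 := mask A (lsubmx Z2).
  have eW : E + E *m K1 - K1 *m Y1 - (E + E *m K2 - K2 *m Y2) =
      E *m (K1 - K2) - ((K1 - K2) *m Y1 + K2 *m (Y1 - Y2)).
    exact: eW_id.
  set d := `|Z1 - Z2|.
  have d0 : 0 <= d := normr_ge0 _.
  have hdK : `|K1 - K2| <= d.
    have -> : K1 - K2 = rsubmx (Z1 - Z2) by rewrite linearB.
    exact: mxn_rsub.
  have hdY : `|Y1 - Y2| <= d.
    have -> : Y1 - Y2 = mask A (lsubmx (Z1 - Z2)) by rewrite maskB linearB.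
    exact: le_trans (mxn_mask _ _) (mxn_lsub _).
  have hk2 : `|K2| <= r := le_trans (mxn_rsub Z2) h2.
  have hy1 : `|Y1| <= r := le_trans (mxn_mask _ _) (le_trans (mxn_lsub Z1) h1).
  have hW : `|E *m (K1 - K2) - ((K1 - K2) *m Y1 + K2 *m (Y1 - Y2))|
      <= (m * `|E| + m * r + m * r) * d.
    rewrite (le_trans (ler_normB _ _)) // (le_trans (lerD (lexx _) (ler_normD _ _))) //.
    rewrite !mulrDl addrA; apply: lerD; first apply: lerD.
    - apply: (le_trans (mxn_mul _ _)).
      exact: ler_pM (mulr_ge0 N0 e0) (normr_ge0 _) (ler_pM N0 e0 nm (lexx _)) hdK.
    - apply: (le_trans (mxn_mul _ _)); rewrite [m * r * d]mulrAC.
      exact: ler_pM (mulr_ge0 N0 (normr_ge0 _)) (normr_ge0 _)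
                   (ler_pM N0 (normr_ge0 _) nm hdK) hy1.
    - apply: (le_trans (mxn_mul _ _)).
      exact: ler_pM (mulr_ge0 N0 (normr_ge0 _)) (normr_ge0 _)
                   (ler_pM N0 (normr_ge0 _) nm hk2) hdY.
  rewrite eW (le_trans (ler_wpM2l c0 hW)) // mulrA ler_wpM2r //.
  exact: num2.
have [Z [Zr ZF]] := fixed_ball r0 Fball Flip.
set K := rsubmx Z; set Y := lsubmx Z; set Dm := mask A Y.
have hLZ : Dm + K *m A - A *m K = E + E *m K - K *m Dm.
  have h := @LfG R n A (E + E *m K - K *m Dm) full.
  by rewrite -/(F Z) -ZF in h; exact: h.
have hY : `|Y| <= r := le_trans (mxn_lsub Z) Zr.
have hK : `|K| <= r := le_trans (mxn_rsub Z) Zr.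
have hDm : `|Dm| <= r := le_trans (mxn_mask _ _) hY.
pose A' := A + Dm.
have hQ' : inQ P A'.
  move=> i j; have := hQ i j; rewrite /A' mxE /Dm mxE.
  have hyij : `|Y i j| <= a / 2 := le_trans (mxn_entry _ _ _) (le_trans hY ra).
  move: hyij; rewrite ler_norml => /andP [ylo yhi].
  case: (P i j) => /= h.
  - have Anz : A i j != 0 by rewrite gt_eqF.
    have := aA i j Anz; rewrite (negbTE Anz) gtr0_norm // => haA.
    lra.
  - have Anz : A i j != 0 by rewrite lt_eqF.
    have := aA i j Anz; rewrite (negbTE Anz) ltr0_norm // => haA.
    lra.
  - by rewrite h addr0.
have hKsmall : n%:R * `|K| < 1.
  have : n%:R * `|K| <= m * r := ler_pM N0 (normr_ge0 _) nm hK.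
  have : m * r <= 1 / 8 by nra.
  move=> h1 h2; apply: (le_lt_trans h2); apply: (le_lt_trans h1).
  by rewrite mul1r invf_lt1 // ltr1n.
have Tu := unit_small hKsmall.
exists A'; split => //; split.
  exists (invmx (1%:M + K)); split; first by rewrite unitmx_inv.
  rewrite invmxK.
  have hMT : M *m (1%:M + K) = (1%:M + K) *m A'.
    have -> : M = A + E by rewrite /E addrC subrK.
    apply/eqP; rewrite -subr_eq0.
    have -> : (A + E) *m (1%:M + K) - (1%:M + K) *m A' =
        (E + E *m K - K *m Dm) - (Dm + K *m A - A *m K).
      exact: hMT_id.
    by rewrite hLZ subrr.
  by rewrite -hMT mulmxK.
apply: (nSSP_pert (P := P) full hQ hQ' hG c0 _ (ltW r0)).
- by rewrite /A' addrC addKr.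
- apply: (@le_lt_trans _ _ (2 * m * c * r)).
    have cr0 : 0 <= c * r by rewrite mulr_ge0 // ltW.
    have := ler_wpM2r cr0 n3m; lra.
  have -> : 2 * m * c * r = 2 * (c * m * r) by ring.
  lra.
Qed.
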